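(* For every modal proposition $A$, $\mathsf{iK4}\vdash A^\Box\to\Box A^\Box$.
   Context: Modal language: propositional variables, $\bot$, $\wedge,\vee,\to$, $\Box$; atomic = variables and $\bot$. $\mathsf{iK4}$: intuitionistic propositional logic in the modal language plus $\Box(A\to B)\to(\Box A\to\Box B)$ and $\Box A\to\Box\Box A$, closed under modus ponens and necessitation. Box-translation: $A^\Box:=A\wedge\Box A$ for atomic $A$; $(A\circ B)^\Box:=A^\Box\circ B^\Box$ for $\circ\in\{\wedge,\vee\}$; $(A\to B)^\Box:=(A^\Box\to B^\Box)\wedge\Box(A^\Box\to B^\Box)$; $(\Box A)^\Box:=\Box(A^\Box)$. *)

(* Defs.v *)
Inductive form : Type :=
| Var : nat -> form
| Bot : form
| And : form -> form -> form
| Or  : form -> form -> form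
| Imp : form -> form -> form
| Box : form -> form.

Inductive iK4 : form -> Prop :=
| ax_K1 : forall A B, iK4 (Imp A (Imp B A))
| ax_S  : forall A B C,
    iK4 (Imp (Imp A (Imp B C)) (Imp (Imp A B) (Imp A C)))
| ax_andE1 : forall A B, iK4 (Imp (And A B) A)
| ax_andE2 : forall A B, iK4 (Imp (And A B) B)
| ax_andI  : forall A B, iK4 (Imp A (Imp B (And A B)))
| ax_orI1  : forall A B, iK4 (Imp A (Or A B))
| ax_orI2  : forall A B, iK4 (Imp B (Or A B))
| ax_orE   : forall A B C,
    iK4 (Imp (Imp A C) (Imp (Imp B C) (Imp (Or A B) C)))
| ax_efq   : forall A, iK4 (Imp Bot A)
| ax_K     : forall A B, iK4 (Imp (Box (Imp A B)) (Imp (Box A) (Box B)))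
| ax_4     : forall A, iK4 (Imp (Box A) (Box (Box A)))
| r_mp     : forall A B, iK4 (Imp A B) -> iK4 A -> iK4 B
| r_nec    : forall A, iK4 A -> iK4 (Box A).

Fixpoint boxtr (A : form) : form :=
  match A with
  | Var n => And (Var n) (Box (Var n))
  | Bot => And Bot (Box Bot)
  | And B C => And (boxtr B) (boxtr C)
  | Or B C => Or (boxtr B) (boxtr C)
  | Imp B C => And (Imp (boxtr B) (boxtr C)) (Box (Imp (boxtr B) (boxtr C)))
  | Box B => Box (boxtr B)
  end.

(* Main.v *)
Require Import Defs.

Lemma trans A B C : iK4 (Imp A B) -> iK4 (Imp B C) -> iK4 (Imp A C).
Proof.
  intros h1 h2.
  apply (r_mp _ _ (r_mp _ _ (ax_S A B C) (r_mp _ _ (ax_K1 _ A) h2)) h1).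
Qed.

Lemma sS C A B : iK4 (Imp C (Imp A B)) -> iK4 (Imp C A) -> iK4 (Imp C B).
Proof. intros h1 h2. exact (r_mp _ _ (r_mp _ _ (ax_S C A B) h1) h2). Qed.

Lemma andI' C A B : iK4 (Imp C A) -> iK4 (Imp C B) -> iK4 (Imp C (And A B)).
Proof. intros h1 h2. apply sS with B; auto. apply trans with A; auto. apply ax_andI. Qed.

Lemma boxmono A B : iK4 (Imp A B) -> iK4 (Imp (Box A) (Box B)).
Proof. intros h. exact (r_mp _ _ (ax_K A B) (r_nec _ h)). Qed.

Lemma boxand C A B : iK4 (Imp C (Box A)) -> iK4 (Imp C (Box B)) ->
  iK4 (Imp C (Box (And A B))).
Proof.
  intros h1 h2. apply sS with (Box B); auto.
  apply trans with (Box (Imp B (And A B))).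
  - apply trans with (Box A); auto. apply boxmono, ax_andI.
  - apply ax_K.
Qed.

Lemma orE' A B C : iK4 (Imp A C) -> iK4 (Imp B C) -> iK4 (Imp (Or A B) C).
Proof. intros h1 h2. exact (r_mp _ _ (r_mp _ _ (ax_orE A B C) h1) h2). Qed.

Lemma pair_case X : iK4 (Imp (And X (Box X)) (Box (And X (Box X)))).
Proof.
  apply boxand.
  - apply ax_andE2.
  - apply trans with (Box X). apply ax_andE2. apply ax_4.
Qed.

Theorem lemma4p13 : forall A : form, iK4 (Imp (boxtr A) (Box (boxtr A))).
Proof.
  induction A; simpl.
  - apply pair_case.
  - apply trans with Bot. apply ax_andE1. apply ax_efq.
  - apply boxand.
    + apply trans with (boxtr A1). apply ax_andE1. auto.
    + apply trans with (boxtr A2). apply ax_andE2. auto.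
  - apply orE'.
    + apply trans with (Box (boxtr A1)); auto. apply boxmono, ax_orI1.
    + apply trans with (Box (boxtr A2)); auto. apply boxmono, ax_orI2.
  - apply pair_case.
  - apply ax_4.
Qed.
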